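(* The following greedy algorithm terminates after a finite number of iterations. Start from a cycle $\bar\Xi$ (a travelling-salesman tour of $\mathcal G$). First loop: set $\Delta_G\leftarrow\epsilon$; while $\Delta_G\ge\epsilon$, let $\bar\Xi'$ be a cycle maximizing $\hat J(\bar\Xi)-\hat J(\bar\Xi')$ among the cycles obtainable from $\bar\Xi$ by one CMO of Type I, set $\Delta_G\leftarrow\hat J(\bar\Xi)-\hat J(\bar\Xi')$ and $\bar\Xi\leftarrow\bar\Xi'$. Second loop: set $\Delta_G\leftarrow\epsilon$; while $\Delta_G\ge\epsilon$, let $\bar\Xi'$ maximize $\hat J(\bar\Xi)-\hat J(\bar\Xi')$ among cycles obtainable from $\bar\Xi$ by one CMO of Type II or III, set $\Delta_G\leftarrow\hat J(\bar\Xi)-\hat J(\bar\Xi')$ and $\bar\Xi\leftarrow\bar\Xi'$. Return $\bar\Xi$.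
   Context: $\mathcal G=(\mathcal V,\mathcal E)$ is a graph of targets with travel time $d_{i,j}>0$ on each edge; $\epsilon>0$ is a fixed small constant. A cycle (visiting sequence) $\bar\Xi=[p_1,\dots,p_N]$ is a closed walk of targets, repetitions allowed. For target $i$ appearing $N_i$ times in $\bar\Xi$, $w_i^k$ is the total travel time along the cycle from the $(k-1)$-th to the $k$-th occurrence of $i$ (cyclically), and the corresponding sub-cycle is the portion of the cycle after the $(k-1)$-th occurrence of $i$ up to and including its $k$-th occurrence. Each target $i$ has matrices $A_i$, $Q_i\succ0$, $G_i\succeq0$ with $\Omega_{\text{ss},i}$ the positive definite solution of $A_i\Omega+\Omega A_i^\top+Q_i-\Omega G_i\Omega=0$, a strictly increasing $g_i$ with $g_i(0)=0$, and $L_i(t)=g_i(\|e^{A_it}\Omega_{\text{ss},i}e^{A_i^\top t}+\int_0^te^{A_i(t-\tau)}Q_ie^{A_i^\top(t-\tau)}d\tau\|)$, $\|\cdot\|$ a norm on positive semi-definite matrices. The metric is $\hat J(\bar\Xi)=\max_{i\in\bar\Xi}L_i(\max_k w_i^k)$. The critical target occurrence $i^{k*}$ is an occurrence attaining this maximum (maximizing $i$, then maximizing $k$), with critical sub-cycle $\Xi_i^{k*}$. Cycle modification operations (CMOs), applied within the critical sub-cycle: Type I replaces an edge $(l,j)$ of the sub-cycle by a fastest path in $\mathcal G$ between $l$ and $j$; Type II replaces an edge $(l,j)$ of the sub-cycle, with neither endpoint being the critical occurrence $i^{k*}$, by the two edges $(l,i),(i,j)$; Type III selects an occurrence of a target $j\neq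 i$ in the sub-cycle and inserts the two visits $i,j$ immediately after it. *)

(* Defs.v *)
From HB Require Import structures.
From mathcomp Require Import all_boot all_order all_algebra.
From mathcomp Require Import all_classical all_reals all_analysis.
Set Implicit Arguments. Unset Strict Implicit. Unset Printing Implicit Defensive.
Import Order.TTheory GRing.Theory Num.Theory.
Import numFieldNormedType.Exports.
Local Open Scope classical_set_scope.
Local Open Scope ring_scope.

Section Matrices.
Variable R : realType.

Definition sym_mx n (M : 'M[R]_n) := M^T = M.
Definition psd_mx n (M : 'M[R]_n) :=
  sym_mx M /\ forall v : 'cV[R]_n, 0 <= (v^T *m M *m v) 0 0.
Definition pd_mx n (M : 'M[R]_n) :=
  sym_mx M /\ forall v : 'cV[R]_n, v != 0 -> 0 < (v^T *m M *m v) 0 0.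

Definition psd_norm n (nrm : 'M[R]_n -> R) :=
  [/\ forall M, psd_mx M -> 0 <= nrm M,
      forall M, psd_mx M -> nrm M = 0 -> M = 0,
      forall (a : R) M, 0 <= a -> psd_mx M -> nrm (a *: M) = a * nrm M
    & forall M N, psd_mx M -> psd_mx N -> nrm (M + N) <= nrm M + nrm N].

Definition expmx n (A : 'M[R]_n) (t : R) : 'M[R]_n :=
  \matrix_(i, j) limn (fun N => \sum_(k < N) (t ^+ k / (k`!)%:R) * (A ^+ k) i j).

Definition int0_mx n (t : R) (F : R -> 'M[R]_n) : 'M[R]_n :=
  \matrix_(i, j) (\int[@lebesgue_measure R]_(tau in `[0, t]) F tau i j).

Definition Lcost n (A Q Om : 'M[R]_n) (g : R -> R) (nrm : 'M[R]_n -> R) (t : R) : R :=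
  g (nrm (expmx A t *m Om *m expmx A^T t +
          int0_mx t (fun tau => expmx A (t - tau) *m Q *m expmx A^T (t - tau)))).

End Matrices.

Section Cycles.
Variables (R : realType) (V : finType) (e : rel V) (d : V -> V -> R).

(* a cycle (closed walk) [p_0; ...; p_{N-1}], the edge p_{N-1} -> p_0 closing it *)
Definition is_cycle (s : seq V) := s != [::] /\ cycle e s.

(* [at_ x0 s m] = p_{m mod N}; the default x0 is irrelevant for nonempty s *)
Definition at_ (x0 : V) (s : seq V) (m : nat) : V := nth x0 s (m %% size s)%N.

Definition edge_time x0 s m : R := d (at_ x0 s m) (at_ x0 s m.+1).

Definition cycle_time x0 s : R := \sum_(m < size s) edge_time x0 s m.

(* gap (number of edges) from the previous occurrence of the target at position q
   to position q, cyclically; equals N if the target occurs only once *)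
Definition prev_gap x0 s q : nat :=
  head (size s) [seq k <- iota 1 (size s) |
                  at_ x0 s (q + size s - k)%N == at_ x0 s q].

Definition prev_pos x0 s q : nat := ((q + size s - prev_gap x0 s q) %% size s)%N.

(* w_i^k for the occurrence at position q: travel time from the previous
   occurrence of the same target up to q *)
Definition w_at x0 s q : R :=
  \sum_(t < prev_gap x0 s q) edge_time x0 s (prev_pos x0 s q + t)%N.

Definition maxw x0 s (i : V) : R :=
  \big[Num.max/0]_(q < size s | at_ x0 s q == i) w_at x0 s q.

Definition Jhat (L : V -> R -> R) (s : seq V) : R :=
  if s is x0 :: _ then \big[Num.max/0]_(i : V | i \in s) L i (maxw x0 s i) else 0.

Definition critical (L : V -> R -> R) x0 s q : Prop :=
  (q < size s)%N /\ Jhat L s = L (at_ x0 s q) (maxw x0 s (at_ x0 s q)) /\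
  w_at x0 s q = maxw x0 s (at_ x0 s q).

(* edges of the critical sub-cycle: the edges leaving positions
   prev_pos + t (mod N), t < prev_gap; its target occurrences:
   positions prev_pos + t (mod N), 1 <= t <= prev_gap *)

Fixpoint walk_time (x : V) (p : seq V) : R :=
  if p is y :: p' then d x y + walk_time y p' else 0.

Definition is_walk (l j : V) (p : seq V) := [/\ p != [::], path e l p & last l p = j].

Definition fastest_path (l j : V) (p : seq V) :=
  is_walk l j p /\ forall p', is_walk l j p' -> walk_time l p <= walk_time l p'.

Definition insert_after (s : seq V) (m : nat) (ins : seq V) :=
  take m.+1 s ++ ins ++ drop m.+1 s.

Definition cmo1 x0 s q s' : Prop :=
  exists t, exists p, (t < prev_gap x0 s q)%N /\
    let m := ((prev_pos x0 s q + t) %% size s)%N in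
    fastest_path (at_ x0 s m) (at_ x0 s m.+1) p /\
    s' = insert_after s m (take (size p).-1 p).

Definition cmo2 x0 s q s' : Prop :=
  exists t, (t < prev_gap x0 s q)%N /\
    let m := ((prev_pos x0 s q + t) %% size s)%N in
    m != q /\ (m.+1 %% size s)%N != q /\ s' = insert_after s m [:: at_ x0 s q].

Definition cmo3 x0 s q s' : Prop :=
  exists t, [/\ (1 <= t)%N, (t <= prev_gap x0 s q)%N &
    let m := ((prev_pos x0 s q + t) %% size s)%N in
    at_ x0 s m != at_ x0 s q /\ s' = insert_after s m [:: at_ x0 s q; at_ x0 s m]].

(* kind = false : Type I ; kind = true : Type II or III.
   [greedy_choice L kind s s'] : for some critical occurrence of s, s' is a cycle
   obtainable by one CMO of the given kind that maximizes J(s) - J(s') among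
   all such cycles *)
Definition cmo_nbr (kind : bool) x0 s q s' : Prop :=
  is_cycle s' /\ (if kind then cmo2 x0 s q s' \/ cmo3 x0 s q s' else cmo1 x0 s q s').

Definition greedy_choice (L : V -> R -> R) (kind : bool) (s s' : seq V) : Prop :=
  if s is x0 :: _ then
    exists q, critical L x0 s q /\ cmo_nbr kind x0 s q s' /\
      forall s'', cmo_nbr kind x0 s q s'' -> Jhat L s - Jhat L s'' <= Jhat L s - Jhat L s'
  else False.

(* states of the algorithm: (false, s) = in the first loop, (true, s) = in the
   second loop, with current cycle s.  One iteration: *)
Definition alg_step (L : V -> R -> R) (eps : R) (st st' : bool * seq V) : Prop :=
  match st, st' with
  | (false, s), (false, s') => greedy_choice L false s s' /\ eps <= Jhat L s - Jhat L s'
  | (false, s), (true, s') => greedy_choice L false s s' /\ Jhat L s - Jhat L s' < eps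
  | (true, s), (true, s') => greedy_choice L true s s' /\ eps <= Jhat L s - Jhat L s'
  | _, _ => False
  end.
(* (an iteration of the second loop with J(s) - J(s') < eps returns s') *)

Definition hamiltonian (s : seq V) := [/\ is_cycle s, uniq s & forall v, v \in s].
Definition tsp_tour (s : seq V) :=
  hamiltonian s /\ if s is x0 :: _ then
     forall s', hamiltonian s' -> cycle_time x0 s <= (if s' is y0 :: _ then cycle_time y0 s' else 0)
  else False.

End Cycles.

(* Main.v *)
Require Import Defs.
From HB Require Import structures.
From mathcomp Require Import all_boot all_order all_algebra.
From mathcomp Require Import all_classical all_reals all_analysis.
From mathcomp Require Import ring lra.
Import Order.TTheory GRing.Theory Num.Theory.
Import numFieldNormedType.Exports.
Local Open Scope classical_set_scope.
Local Open Scope ring_scope.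

Lemma Jhat_ge0 (R : realType) (V : finType) (d : V -> V -> R) (L : V -> R -> R) (s : seq V) :
  0 <= Jhat d L s.
Proof.
case: s => [|x0 s] //=.
apply: (big_rec (fun x => 0 <= x)) => // i x _ hx.
by rewrite le_max hx orbT.
Qed.

Lemma no_decr (R : realType) (f : nat -> R) (eps : R) (m : nat) :
  0 < eps -> (forall k, 0 <= f k) ->
  (forall k, f (m + k).+1 <= f (m + k) - eps) -> False.
Proof.
move=> he hpos hd.
have H : forall k, f (m + k)%N <= f m - k%:R * eps.
  elim=> [|k IH]; first by rewrite addn0 mul0r subr0.
  rewrite addnS; apply: (le_trans (hd k)).
  have -> : f m - k.+1%:R * eps = f m - k%:R * eps - eps.
    by rewrite -nat1r mulrDl mul1r; ring.
  by rewrite lerD2r.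
have hm : 0 <= f m / eps by rewrite divr_ge0 // ltW.
have := archi_boundP hm.
set N := Num.Def.archi_bound _ => hN.
have := H N; have := hpos (m + N)%N => h1 h2.
have : 0 <= f m - N%:R * eps by apply: le_trans h1 h2.
rewrite subr_ge0 -ler_pdivlMr // => h3.
by move: (lt_le_trans hN h3); rewrite ltxx.
Qed.

Theorem lemma6 (R : realType) (V : finType) (e : rel V) (d : V -> V -> R)
  (eps : R) (n : V -> nat)
  (A Q G Om : forall i : V, 'M[R]_(n i))
  (g : V -> R -> R) (nrm : forall i : V, 'M[R]_(n i) -> R) :
  irreflexive e -> symmetric e ->
  (forall x y, e x y -> 0 < d x y) ->
  (forall x y, e x y -> d x y = d y x) ->
  0 < eps ->
  (forall i, pd_mx (Q i)) ->
  (forall i, psd_mx (G i)) ->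
  (forall i, pd_mx (Om i)) ->
  (forall i, A i *m Om i + Om i *m (A i)^T + Q i - Om i *m G i *m Om i = 0) ->
  (forall i, g i 0 = 0) ->
  (forall i x y, 0 <= x -> x < y -> g i x < g i y) ->
  (forall i, psd_norm (nrm i)) ->
  let L := fun i => Lcost (A i) (Q i) (Om i) (g i) (nrm i) in
  forall s0 : seq V, tsp_tour e d s0 ->
  forall run : nat -> bool * seq V, run 0%N = (false, s0) ->
  ~ (forall k, alg_step e d L eps (run k) (run k.+1)).
Proof.
move=> _ _ _ _ he _ _ _ _ _ _ _ L s0 _ run _ hstep.
pose f k := Jhat d L (run k).2.
have hpos : forall k, 0 <= f k by move=> k; apply: Jhat_ge0.
have dec : forall k, (run k).1 = (run k.+1).1 -> f k.+1 <= f k - eps.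
  move=> k; have := hstep k; rewrite /f.
  case: (run k) => [[] s]; case: (run k.+1) => [[] s'] //=;
    by move=> [_ h] _; rewrite lerBrDr addrC -lerBrDr.
have tt : forall k, (run k).1 = true -> (run k.+1).1 = true.
  move=> k; have := hstep k.
  by case: (run k) => [[] s]; case: (run k.+1) => [[] s'].
case: (pselect (exists k0, (run k0).1 = true)) => [[k0 hk0]|hno].
  have allt : forall k, (run (k0 + k)%N).1 = true.
    elim=> [|k IH]; first by rewrite addn0.
    by rewrite addnS; apply: tt.
  apply: (@no_decr R f eps k0 he hpos) => k.
  by apply: dec; rewrite allt -addnS allt.
have allf : forall k, (run k).1 = false.
  move=> k; case E: (run k).1 => //; exfalso; apply: hno; by exists k.
apply: (@no_decr R f eps 0 he hpos) => k.
by apply: dec; rewrite !allf.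
Qed.
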